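(* Let $n\ge3$, $i\in[n-2]$, and $m=n-i-1$. Let $p_{i,n}$ be the number of words $u$ of length $i$ with $i$ distinct letters from $[n]$ such that $[n]\setminus{\rm alph}(u)$ is periodic. Then $$p_{i,n}=\frac{q_{n,m}}{2}\,(r_{n,m}+i+1)\, i!,$$ where $q_{n,m}$ and $r_{n,m}$ are the quotient and remainder of the division of $n$ by $m$.
   Context: $[n]=\{1,\ldots,n\}$; ${\rm alph}(u)$ is the set of letters of $u$. A finite set $A\subset\mathbb P$ with $|A|\ge2$ is periodic if the differences between consecutive elements (in increasing order) are all equal. For integers $l$ and $m\ne0$, $l=q_{l,m}m+r_{l,m}$ with $0\le r_{l,m}<m$. *)

(* Defs.v *)
From mathcomp Require Import all_boot.
Set Implicit Arguments. Unset Strict Implicit. Unset Printing Implicit Defensive.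

Definition periodic_seq (s : seq nat) : bool :=
  (2 <= size s) &&
  all (fun k => nth 0 s k.+1 - nth 0 s k == nth 0 s 1 - nth 0 s 0)
      (iota 0 (size s).-1).

(* The letter x : 'I_n stands for the integer x+1 of [n] = {1,...,n}. *)
Definition letter n (x : 'I_n) : nat := (val x).+1.

Definition periodic_set n (A : {set 'I_n}) : bool :=
  periodic_seq (sort leq [seq letter x | x in A]).

Definition alph n i (u : i.-tuple 'I_n) : {set 'I_n} := [set x in u].

Definition p_count (n i : nat) : nat :=
  #|[set u : i.-tuple 'I_n | uniq u &&
       periodic_set (~: alph u)]|.

(* Main.v *)
Require Import Defs.
From mathcomp Require Import all_boot.
From mathcomp Require Import zify.
Set Implicit Arguments. Unset Strict Implicit. Unset Printing Implicit Defensive.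

Definition ss n (A : {set 'I_n}) := sort leq [seq letter x | x in A].

Lemma mem_ss n (A : {set 'I_n}) (y : 'I_n) : (y.+1 \in ss A) = (y \in A).
Proof.
rewrite /ss mem_sort; apply/imageP/idP => [[z zA /eqP]|yA].
  by rewrite /letter eqSS => /eqP/val_inj ->.
by exists y.
Qed.

Lemma ss_elem n (A : {set 'I_n}) k : k \in ss A -> exists2 y : 'I_n, y \in A & k = y.+1.
Proof. by rewrite /ss mem_sort => /imageP [y yA ->]; exists y. Qed.

Lemma ss_sorted n (A : {set 'I_n}) : sorted ltn (ss A).
Proof.
rewrite ltn_sorted_uniq_leq sort_uniq sort_sorted ?andbT; last exact: leq_total.
rewrite map_inj_uniq ?enum_uniq // => x y /eqP; rewrite /letter eqSS => /eqP.
exact: val_inj.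
Qed.

Lemma size_ss n (A : {set 'I_n}) : size (ss A) = #|A|.
Proof. by rewrite /ss size_sort size_map -cardE. Qed.

Lemma ss_inj n (A B : {set 'I_n}) : ss A = ss B -> A = B.
Proof. by move=> e; apply/setP => y; rewrite -!mem_ss e. Qed.

Definition fset n m (p : 'I_n * 'I_n) : {set 'I_n} :=
  [set y : 'I_n | [exists j : 'I_m.+1, val y == p.1 + j * p.2.+1]].

Definition apseq a d k := mkseq (fun j => a + j * d) k.

Lemma apseq_sorted a d k : 0 < d -> sorted ltn (apseq a d k).
Proof.
move=> d0; rewrite /apseq /mkseq; apply: homo_sorted (iota_ltn_sorted 0 k).
by move=> x y /= xy; rewrite ltn_add2l ltn_pmul2r.
Qed.

Lemma mem_apseq a d k z : (z \in apseq a d k) = [exists j : 'I_k, z == a + j * d].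
Proof.
rewrite /apseq /mkseq; apply/idP/idP.
  by case/mapP=> j; rewrite mem_iota add0n => /andP[_ jk] ->; apply/existsP; exists (Ordinal jk).
case/existsP=> j /eqP ->; apply/mapP.
by exists (val j); rewrite // mem_iota add0n ltn_ord.
Qed.

Lemma ss_fset n m (p : 'I_n * 'I_n) : p.1 + m * p.2.+1 < n ->
  ss (fset m p) = apseq p.1.+1 p.2.+1 m.+1.
Proof.
move=> hp; apply: (irr_sorted_eq ltn_trans ltnn) (ss_sorted _) (apseq_sorted _ _ _) _ => //.
move=> k; rewrite mem_apseq; apply/idP/existsP.
  case/ss_elem => y; rewrite inE => /existsP [j /eqP hj] ->.
  by exists j; rewrite hj addSn.
case=> j /eqP hk.
have hj : (k.-1 < n)%N.
  have := ltn_ord j; rewrite hk /= ltnS => jm.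
  have : j * p.2.+1 <= m * p.2.+1 by rewrite leq_mul2r jm orbT.
  lia.
have -> : k = (Ordinal hj).+1 by rewrite /= hk.
rewrite mem_ss inE; apply/existsP; exists j; rewrite /= hk.
by rewrite addSn.
Qed.

Lemma periodic_fset n m (p : 'I_n * 'I_n) : 0 < m -> p.1 + m * p.2.+1 < n ->
  periodic_set (fset m p).
Proof.
move=> m0 hp; rewrite /periodic_set -/(ss _) ss_fset // /periodic_seq /apseq size_mkseq.
rewrite ltnS m0 andTb; apply/allP => k; rewrite mem_iota add0n => /andP[_ km].
rewrite !nth_mkseq // ?ltnS ?(ltnW km) //.
apply/eqP; rewrite mulSn mul1n mul0n; lia.
Qed.

Lemma periodic_inv n m (A : {set 'I_n}) : 0 < m -> periodic_set A -> #|A| = m.+1 ->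
  exists2 p : 'I_n * 'I_n, p.1 + m * p.2.+1 < n & A = fset m p.
Proof.
move=> m0 hP hA.
have sz : size (ss A) = m.+1 by rewrite size_ss.
have so := ss_sorted A.
move: hP; rewrite /periodic_set -/(ss A) /periodic_seq => /andP [_ /allP hall].
set s := ss A in sz so hall *.
set a := nth 0 s 0; set d := nth 0 s 1 - a.
have hlt : forall k, k < m -> nth 0 s k < nth 0 s k.+1.
  move=> k km; apply: (sorted_ltn_nth ltn_trans 0 so); rewrite ?inE ?sz //.
  by rewrite ltnS ltnW.
have hstep : forall k, k < m -> nth 0 s k.+1 = nth 0 s k + d.
  move=> k km; have := hall k; rewrite mem_iota add0n sz /= km => /(_ isT) /eqP.
  have := hlt k km; have := hlt 0 m0; rewrite /d /a; lia.
have hnth : forall j, j <= m -> nth 0 s j = a + j * d.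
  elim=> [|j IH] jm; first by rewrite mul0n addn0.
  by rewrite hstep // IH ?(ltnW jm) // mulSn; lia.
have hs : s = apseq a d m.+1.
  apply: (@eq_from_nth _ 0); first by rewrite sz /apseq size_mkseq.
  by move=> j; rewrite sz => jm; rewrite /apseq nth_mkseq // hnth.
have d0 : 0 < d by have := hlt 0 m0; rewrite /d /a; lia.
have [y0 _ ha] : exists2 y : 'I_n, y \in A & a = y.+1.
  by apply: ss_elem; rewrite -/s mem_nth // sz.
have [y1 _ hl] : exists2 y : 'I_n, y \in A & a + m * d = y.+1.
  by apply: ss_elem; rewrite -/s -hnth // mem_nth // sz.
have h1 : a.-1 < n by have := ltn_ord y1; lia.
have h2 : d.-1 < n.
  have := ltn_ord y1; have : d <= m * d by rewrite leq_pmull.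
  lia.
exists (Ordinal h1, Ordinal h2) => /=.
  rewrite (prednK d0); have := ltn_ord y1; lia.
apply: ss_inj; rewrite ss_fset /=; last by rewrite (prednK d0); have := ltn_ord y1; lia.
by rewrite -/s hs !prednK // ha.
Qed.

Lemma card_fset n m (p : 'I_n * 'I_n) : p.1 + m * p.2.+1 < n -> #|fset m p| = m.+1.
Proof. by move=> hp; rewrite -size_ss ss_fset // /apseq size_mkseq. Qed.

Definition Dset n m : {set 'I_n * 'I_n} := [set p : 'I_n * 'I_n | val p.1 + m * p.2.+1 < n].

Lemma fset_inj n m : 0 < m -> {in Dset n m &, injective (fset m)}.
Proof.
move=> m0 p q; rewrite !inE => hp hq e.
have := congr1 (@ss n) e; rewrite !ss_fset // => e'.
have e0 : nth 0 (apseq p.1.+1 p.2.+1 m.+1) 0 = nth 0 (apseq q.1.+1 q.2.+1 m.+1) 0 by rewrite e'.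
have e1 : nth 0 (apseq p.1.+1 p.2.+1 m.+1) 1 = nth 0 (apseq q.1.+1 q.2.+1 m.+1) 1 by rewrite e'.
move: e0 e1; rewrite /apseq !nth_mkseq // mul0n mul1n !addn0 => e0 e1.
case: p q e0 e1 {hp hq e e'} => [x y] [x' y'] /= [e0] [e1].
by congr pair; apply: val_inj => /=; [rewrite e0 | move: e1; rewrite e0 mul1n; lia].
Qed.

Lemma periodic_card n m : 0 < m ->
  #|[set A : {set 'I_n} | periodic_set A && (#|A| == m.+1)]| = #|Dset n m|.
Proof.
move=> m0; rewrite -(card_in_imset (@fset_inj n m m0)).
suff -> : [set A : {set 'I_n} | periodic_set A && (#|A| == m.+1)] = fset m @: Dset n m by [].
apply/setP => A; rewrite inE; apply/andP/imsetP.
  case=> hP /eqP hA; have [p hp ->] := periodic_inv m0 hP hA.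
  by exists p; rewrite ?inE.
case=> p; rewrite inE => hp ->; split; first exact: periodic_fset.
by rewrite card_fset.
Qed.

Lemma sum_lt N K : \sum_(x < N) (x < K) = minn K N.
Proof.
elim: N => [|N IH]; first by rewrite big_ord0 minn0.
rewrite big_ord_recr /= IH; case: ltnP => h; lia.
Qed.

Lemma card_Dset n m : #|Dset n m| = \sum_(e < n) (n - m * e.+1).
Proof.
rewrite -sum1_card.
rewrite (eq_bigl (fun p : 'I_n * 'I_n => true && (p.1 + m * p.2.+1 < n)));
  last by move=> p; rewrite inE.
rewrite -(pair_big_dep xpredT (fun (x : 'I_n) (e : 'I_n) => val x + m * e.+1 < n) (fun _ _ => 1)) /=.
under eq_bigr => x _ do rewrite big_mkcond /=.
rewrite exchange_big /=; apply: eq_bigr => e _.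
rewrite -[RHS](minn_idPl (leq_subr (m * e.+1) n)) -sum_lt.
by apply: eq_bigr => x _; case: ifP; lia.
Qed.

Lemma sum_ap q m r : 2 * \sum_(0 <= e < q) (e * m + r) + q * m = q * (q * m + 2 * r).
Proof.
elim: q => [|q IH]; first by rewrite big_geq.
rewrite big_nat_recr //=; nia.
Qed.

Lemma sum_arith n m : 0 < m -> m <= n ->
  2 * \sum_(e < n) (n - m * e.+1) = (n %/ m) * (n %% m + n - m).
Proof.
move=> m0 mn.
set q := n %/ m; set r := n %% m.
have hn : n = q * m + r by rewrite /q /r -divn_eq.
have hr : r < m by rewrite /r ltn_pmod.
have hq : q <= n by rewrite /q leq_div.
rewrite -(big_mkord xpredT (fun e => n - m * e.+1)) (@big_cat_nat _ _ _ q 0 n _ _ (leq0n q) hq) /=.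
rewrite [X in _ + X]big1_seq ?addn0; last first.
  move=> e /andP [_]; rewrite mem_index_iota => /andP [qe _].
  have : m * q.+1 <= m * e.+1 by rewrite leq_mul2l ltnS qe orbT.
  nia.
rewrite (@eq_big_nat _ _ _ 0 q _ (fun e => (q - e.+1) * m + r)); last first.
  move=> e /andP [_ eq]; rewrite hn mulnBl; nia.
rewrite big_nat_rev /= add0n.
rewrite (@eq_big_nat _ _ _ 0 q _ (fun e => e * m + r)); last first.
  by move=> e /andP [_ eq]; congr (_ * _ + _); lia.
have := sum_ap q m r; nia.
Qed.

Lemma card_alph n i (u : i.-tuple 'I_n) : uniq u -> #|alph u| = i.
Proof. by move=> uu; rewrite /alph cardsE (card_uniqP uu) size_tuple. Qed.

Lemma p_count_eq n i m : n = m.+1 + i ->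
  p_count n i = #|[set A : {set 'I_n} | periodic_set A && (#|A| == m.+1)]| * i`!.
Proof.
move=> hn; rewrite /p_count -sum1_card.
rewrite (partition_big (@alph n i) (fun S => periodic_set (~: S) && (#|S| == i))); last first.
  by move=> u; rewrite inE => /andP [uu hp]; rewrite hp card_alph ?eqxx.
rewrite /=.
transitivity (\sum_(S : {set 'I_n} | periodic_set (~: S) && (#|S| == i)) i`!).
  apply: eq_bigr => S /andP [hP /eqP hS].
  have -> : i`! = #|[set t : i.-tuple 'I_n | all (fun x => x \in S) t & uniq t]|.
    by rewrite card_uniq_tuples -ffactnn -[X in X ^_ _]hS.
  rewrite sum1_card; apply: eq_card => u.
  rewrite unfold_in /= !inE; apply/idP/idP.
    case/andP => /andP [uu _] /eqP <-; rewrite uu andbT.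
    by apply/allP => x xu; rewrite /alph inE.
  case/andP => /allP hall uu; rewrite uu /=.
  have -> : alph u = S.
    apply/eqP; rewrite eqEcard card_alph // hS leqnn andbT.
    by apply/subsetP => x; rewrite /alph inE => /hall.
  by rewrite hP eqxx.
rewrite (reindex_inj (@setC_inj _)) /= sum_nat_const cardsE; congr (_ * _).
apply: eq_card => A; rewrite !unfold_in /= setCK.
have := cardsC A; rewrite card_ord => hc.
have hc' : #|~: A| = n - #|A| by move: hc; move: #|~: A| #|A| => a b; lia.
have hle : #|A| <= n by move: hc; move: #|~: A| #|A| => a b; lia.
rewrite hc'; move: hle; move: #|A| => x hle.
congr (_ && _); apply/eqP/eqP => h; lia.
Qed.

Theorem mainTheorem9 (n i m : nat) :
  3 <= n -> 1 <= i -> i <= n - 2 -> m = n - i - 1 ->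
  2 * p_count n i = (n %/ m) * ((n %% m) + i + 1) * i`!.
Proof.
move=> n3 i1 i2 hm.
have m0 : 0 < m by lia.
have hn : n = m.+1 + i by lia.
rewrite (p_count_eq hn) (periodic_card n m0) card_Dset mulnA sum_arith //; last by lia.
congr (_ * _ * _); lia.
Qed.
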